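(* Let $\Omega$ be a Polish space, $\mathcal{Q}$ a nonempty convex subset of $\mathfrak{P}(\Omega)$, and $Y:\Omega\to\mathbb{R}^d$ a universally measurable random variable. Assume that the one-period condition $NA(\mathcal{Q})$ holds. Then there exists $\hat p\in\mathcal{Q}$ such that $0\in\mathrm{Ri}\bigl(\mathrm{Conv}(E(\hat p))\bigr)$ and $\mathrm{Aff}(E(\hat p))=\mathrm{Aff}(D)$.
   Context: $\mathfrak{P}(\Omega)$ is the set of Borel probability measures on $\Omega$, each identified with its extension to the universally measurable sets. For $p\in\mathcal{Q}$, $E(p)$ is the intersection of all closed sets $A\subseteq\mathbb{R}^d$ with $p[Y\in A]=1$, and $D$ is the intersection of all closed sets $A\subseteq\mathbb{R}^d$ with $q[Y\in A]=1$ for all $q\in\mathcal{Q}$. A property holds $\mathcal{Q}$-quasi-surely if it holds outside a universally measurable set that is $q$-null for every $q\in\mathcal{Q}$. $NA(\mathcal{Q})$: for every $h\in\mathbb{R}^d$, $h\cdot Y\ge0$ $\mathcal{Q}$-q.s. implies $h\cdot Y=0$ $\mathcal{Q}$-q.s. $\mathrm{Aff}$, $\mathrm{Conv}$ denote affine and convex hulls, and $\mathrm{Ri}$ the relative interior. *)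

(* Defs.v *)
From HB Require Import structures.
From mathcomp Require Import all_boot all_order all_algebra.
From mathcomp Require Import all_classical all_reals all_analysis.
Set Implicit Arguments. Unset Strict Implicit. Unset Printing Implicit Defensive.
Import Order.TTheory GRing.Theory Num.Theory.
Import numFieldNormedType.Exports.
Local Open Scope classical_set_scope.
Local Open Scope ring_scope.

Definition polish_space (R : realType) (T : topologicalType) : Prop :=
  (exists S : set T, countable S /\ closure S = setT) /\
  exists dist : T -> T -> R,
    [/\ forall x y, dist x y = 0 <-> x = y,
        forall x y, dist x y = dist y x,
        forall x y z, dist x z <= dist x y + dist y z,
        (forall A : set T, open A <->
           (forall x, A x -> exists2 e : R, 0 < e & [set y | dist x y < e] `<=` A)) &
        (forall u : nat -> T,
           (forall e : R, 0 < e -> exists N : nat, forall m n : nat,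
               (N <= m)%N -> (N <= n)%N -> dist (u m) (u n) < e) ->
           exists x : T, u @ \oo --> x)].

Definition borel (T : topologicalType) : set (set T) := <<s @open T >>.

Notation borelType T := (g_sigma_algebraType (@open T)).

Notation borel_prob T R := (probability (borelType T) R).

Definition univ_measurable (R : realType) (T : ptopologicalType) (A : set T) : Prop :=
  forall mu : borel_prob T R, exists B1 B2 : set T,
    [/\ borel B1, borel B2, B1 `<=` A, A `<=` B2 & mu (B2 `\` B1) = 0%E].

(* [ext_val p A r]: the extension (completion) of p to the universally
   measurable set A takes the value r at A. *)
Definition ext_val (R : realType) (T : ptopologicalType) (p : borel_prob T R)
    (A : set T) (r : \bar R) : Prop :=
  exists B1 B2 : set T,
    [/\ borel B1, borel B2, B1 `<=` A, A `<=` B2 & p B1 = r /\ p B2 = r].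

Definition univ_measurable_fun (R : realType) (T : ptopologicalType) (d : nat)
    (Y : T -> 'rV[R]_d) : Prop :=
  forall B : set 'rV[R]_d, borel B -> univ_measurable R (Y @^-1` B).

Definition convex_probs (R : realType) (T : ptopologicalType)
    (Q : set (borel_prob T R)) : Prop :=
  forall p q, Q p -> Q q -> forall l : R, 0 <= l <= 1 ->
    exists2 r, Q r & forall A : set T, borel A ->
      r A = (l%:E * p A + (1 - l)%:E * q A)%E.

Definition quasi_surely (R : realType) (T : ptopologicalType)
    (Q : set (borel_prob T R)) (P : T -> Prop) : Prop :=
  exists N : set T, [/\ univ_measurable R N,
     (forall q, Q q -> ext_val q N 0%E) &
     forall w, ~ N w -> P w].

Definition dotv (R : realType) (d : nat) (h x : 'rV[R]_d) : R :=
  \sum_(i < d) h 0 i * x 0 i.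

Definition NA (R : realType) (T : ptopologicalType) (d : nat)
    (Q : set (borel_prob T R)) (Y : T -> 'rV[R]_d) : Prop :=
  forall h : 'rV[R]_d,
    quasi_surely Q (fun w => 0 <= dotv h (Y w)) ->
    quasi_surely Q (fun w => dotv h (Y w) = 0).

Definition supp_E (R : realType) (T : ptopologicalType) (d : nat)
    (Y : T -> 'rV[R]_d) (p : borel_prob T R) : set 'rV[R]_d :=
  [set y | forall A : set 'rV[R]_d, closed A -> ext_val p (Y @^-1` A) 1%E -> A y].

Definition supp_D (R : realType) (T : ptopologicalType) (d : nat)
    (Y : T -> 'rV[R]_d) (Q : set (borel_prob T R)) : set 'rV[R]_d :=
  [set y | forall A : set 'rV[R]_d, closed A ->
     (forall q, Q q -> ext_val q (Y @^-1` A) 1%E) -> A y].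

Definition aff_hull (R : realType) (d : nat) (S : set 'rV[R]_d) : set 'rV[R]_d :=
  [set x | exists n : nat, exists v : 'I_n -> 'rV[R]_d, exists l : 'I_n -> R,
     [/\ forall i, S (v i), \sum_(i < n) l i = 1 & x = \sum_(i < n) l i *: v i]].

Definition conv_hull (R : realType) (d : nat) (S : set 'rV[R]_d) : set 'rV[R]_d :=
  [set x | exists n : nat, exists v : 'I_n -> 'rV[R]_d, exists l : 'I_n -> R,
     [/\ forall i, S (v i), forall i, 0 <= l i, \sum_(i < n) l i = 1
       & x = \sum_(i < n) l i *: v i]].

Definition rel_int (R : realType) (d : nat) (C : set 'rV[R]_d) : set 'rV[R]_d :=
  [set x | C x /\ exists2 e : R, 0 < e & ball x e `&` aff_hull C `<=` C].

(* Main.v *)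
Require Import Defs.
From HB Require Import structures.
From mathcomp Require Import all_boot all_order all_algebra.
From mathcomp Require Import all_classical all_reals all_analysis.
Import Order.TTheory GRing.Theory Num.Theory.
Import numFieldNormedType.Exports.
Local Open Scope classical_set_scope.
Local Open Scope ring_scope.
From mathcomp Require Import ring lra.

Lemma dotvE (R : realType) d (h z : 'rV[R]_d) : dotv h z = (z *m h^T) 0 0.
Proof. by rewrite /dotv !mxE; apply: eq_bigr => i _; rewrite mxE mulrC. Qed.

Lemma dotvDr (R : realType) d (h x y : 'rV[R]_d) : dotv h (x + y) = dotv h x + dotv h y.
Proof. by rewrite !dotvE mulmxDl mxE. Qed.
Lemma dotvZr (R : realType) d (h x : 'rV[R]_d) a : dotv h (a *: x) = a * dotv h x.
Proof. by rewrite !dotvE -scalemxAl mxE. Qed.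
Lemma dotvDl (R : realType) d (h g x : 'rV[R]_d) : dotv (h + g) x = dotv h x + dotv g x.
Proof. by rewrite /dotv -big_split; apply: eq_bigr => i _; rewrite mxE mulrDl. Qed.
Lemma dotvZl (R : realType) d (h x : 'rV[R]_d) a : dotv (a *: h) x = a * dotv h x.
Proof. by rewrite /dotv mulr_sumr; apply: eq_bigr => i _; rewrite mxE mulrA. Qed.
Lemma dotvNl (R : realType) d (h x : 'rV[R]_d) : dotv (- h) x = - dotv h x.
Proof. by rewrite -scaleN1r dotvZl mulN1r. Qed.
Lemma dotv0r (R : realType) d (h : 'rV[R]_d) : dotv h 0 = 0.
Proof. by rewrite /dotv big1 // => i _; rewrite mxE mulr0. Qed.
Lemma dotv_sumr (R : realType) d m (h : 'rV[R]_d) (F : 'I_m -> 'rV[R]_d) :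
  dotv h (\sum_(i < m) F i) = \sum_(i < m) dotv h (F i).
Proof.
elim/big_rec2: _ => [|i y1 y2 _ <-]; first exact: dotv0r.
by rewrite dotvDr.
Qed.
Lemma dotvC (R : realType) d (h x : 'rV[R]_d) : dotv h x = dotv x h.
Proof. by rewrite /dotv; apply: eq_bigr => i _; rewrite mulrC. Qed.

Lemma dotv_cont (R : realType) d (h : 'rV[R]_d) : continuous (dotv h).
Proof.
rewrite /dotv; apply: continuous_big => //.
  exact: add_continuous.
move=> i _ z; apply: continuousM; first exact: cst_continuous.
exact: coord_continuous.
Qed.

Lemma span_dual (R : realType) d m (f : 'I_m -> 'rV[R]_d) (y : 'rV[R]_d) :
  (forall h, (forall i, dotv h (f i) = 0) -> dotv h y = 0) ->
  exists c : 'I_m -> R, y = \sum_(i < m) c i *: f i.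
Proof.
move=> H; pose Fm := \matrix_(i < m) f i.
have [/submxP [D ->]|nsub] := boolP (y <= Fm)%MS.
  exists (fun i => D 0 i); rewrite mulmx_sum_row.
  by apply: eq_bigr => i _; rewrite rowK.
exfalso; move: nsub; rewrite submxE => /negP; apply.
apply/eqP/matrixP => i j; rewrite [i]ord1 [RHS]mxE.
pose h := (col j (cokermx Fm))^T.
have hE z : dotv h z = (z *m cokermx Fm) 0 j.
  by rewrite dotvE trmxK !mxE; apply: eq_bigr => k _; rewrite mxE.
rewrite -hE; apply: H => i'; rewrite hE.
have -> : f i' = row i' Fm by rewrite rowK.
by rewrite -row_mul mulmx_coker !mxE.
Qed.

Lemma ord_split {m} {k : 'I_m.+1} : k <> ord_max ->
  exists j : 'I_m, k = widen_ord (leqnSn m) j.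
Proof.
move=> kn; have km : (k < m)%N.
  by rewrite ltn_neqAle -ltnS ltn_ord andbT; apply/eqP => e; apply: kn; apply: val_inj.
by exists (Ordinal km); apply: val_inj.
Qed.

Lemma stiemke (R : realType) d m (f : 'I_m -> 'rV[R]_d) :
  (forall h, (forall i, 0 <= dotv h (f i)) -> forall i, dotv h (f i) = 0) ->
  exists l : 'I_m -> R, (forall i, 0 < l i) /\ \sum_(i < m) l i *: f i = 0.
Proof.
elim: m f => [|m IH] f H.
  by exists (fun _ => 1); split => //; rewrite big_ord0.
pose g := f ord_max.
pose f' := fun i : 'I_m => f (widen_ord (leqnSn m) i).
have sumE (l : 'I_m.+1 -> R) : \sum_(i < m.+1) l i *: f i =
    \sum_(i < m) l (widen_ord (leqnSn m) i) *: f' i + l ord_max *: g.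
  by rewrite big_ord_recr.
pose ext (l' : 'I_m -> R) (L : R) : 'I_m.+1 -> R :=
  fun k => if unlift ord_max k is Some i then l' i else L.
have extW l' L i : ext l' L (widen_ord (leqnSn m) i) = l' i.
  rewrite /ext (_ : widen_ord _ i = lift ord_max i) ?liftK //.
  by apply: val_inj; rewrite /= /bump leqNgt ltn_ord.
have extM l' L : ext l' L ord_max = L by rewrite /ext unlift_none.
have extP l' L : (forall i, 0 < l' i) -> 0 < L -> forall k, 0 < ext l' L k.
  by move=> l'P LP k; rewrite /ext; case: unlift.
have [caseA|caseB] := pselect (forall h, (forall i, 0 <= dotv h (f' i)) ->
                                  forall i, dotv h (f' i) = 0).
  have [l' [l'P l'0]] := IH f' caseA.
  have [c gE] : exists c : 'I_m -> R, g = \sum_(i < m) c i *: f' i.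
    apply: span_dual => h hf'.
    have key h1 : (forall i, dotv h1 (f' i) = 0) -> 0 <= dotv h1 g ->
        dotv h1 g = 0.
      move=> h1f h1g; apply: (H h1 _ ord_max) => k.
      have [->|kn] := eqVneq k ord_max; first exact: h1g.
      have [j ->] := ord_split (elimN eqP kn).
      by rewrite -/(f' j) h1f.
    have [hg|hg] := leP 0 (dotv h g); first exact: key.
    apply/eqP; rewrite -oppr_eq0 -dotvNl; apply/eqP/key.
      by move=> i; rewrite dotvNl hf' oppr0.
    by rewrite dotvNl oppr_ge0 ltW.
  pose t := \sum_(i < m) (`|c i| + 1) / l' i.
  have tP i : c i < t * l' i.
    rewrite -ltr_pdivrMr // /t (bigD1 i) //=.
    apply: ltr_wpDr.
      by apply: sumr_ge0 => j _; apply: divr_ge0 => //; exact: ltW.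
    by rewrite ltr_pM2r ?invr_gt0 // (le_lt_trans (ler_norm _)) ?ltrDl.
  exists (ext (fun i => t * l' i - c i) 1); split.
    by apply: extP => // i; rewrite subr_gt0.
  rewrite sumE extM scale1r.
  under eq_bigr do rewrite extW scalerBl.
  rewrite sumrB gE subrK.
  under eq_bigr do rewrite -scalerA.
  by rewrite -scaler_sumr l'0 scaler0.
move/existsNP: caseB => [h0] /not_implyP [h0P] /existsNP [j h0j].
have h0g : dotv h0 g < 0.
  rewrite ltNge; apply/negP => h0g; apply: h0j.
  have := H h0 _ (widen_ord (leqnSn m) j); apply => k.
  have [->|kn] := eqVneq k ord_max; first exact: h0g.
  have [j' ->] := ord_split (elimN eqP kn).
  exact: h0P.
pose a := - dotv h0 g.
have aP : 0 < a by rewrite oppr_gt0.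
pose c i := dotv h0 (f' i) / a.
have cP i : 0 <= c i by apply: divr_ge0 => //; exact: ltW.
have cj : 0 < c j.
  by apply: divr_gt0 => //; rewrite lt_neqAle eq_sym; apply/andP; split;
    [apply/eqP | exact: h0P].
pose fs i := f' i + c i *: g.
have : forall h, (forall i, 0 <= dotv h (fs i)) -> forall i, dotv h (fs i) = 0.
  move=> h hP.
  pose t := dotv h g / a.
  pose h2 := h + t *: h0.
  have h2g : dotv h2 g = 0.
    rewrite /h2 dotvDl dotvZl /t -/a.
    rewrite (_ : dotv h0 g = - a); last by rewrite opprK.
    by rewrite mulrN divfK ?subrr // gt_eqF.
  have h2f i : dotv h2 (f' i) = dotv h (fs i).
    rewrite /h2 /fs dotvDl dotvZl dotvDr dotvZr /t /c; congr (_ + _).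
    by rewrite mulrC mulrA mulrAC.
  have all2 := H h2.
  have h2fk : forall k, dotv h2 (f k) = 0.
    apply: all2 => k.
    have [->|kn] := eqVneq k ord_max; first by rewrite -/g h2g.
    have [j' ->] := ord_split (elimN eqP kn).
    by rewrite -/(f' j') h2f.
  by move=> i; rewrite -h2f; apply: h2fk.
move/IH => [ls [lsP ls0]].
exists (ext ls (\sum_(i < m) ls i * c i)); split.
  apply: extP => //.
  rewrite (bigD1 j) //=; apply: ltr_wpDr; last by rewrite mulr_gt0.
  by apply: sumr_ge0 => i _; apply: mulr_ge0 => //; exact: ltW.
have ls0' : \sum_(i < m) ls i *: f' i + (\sum_(i < m) ls i * c i) *: g = 0.
  rewrite -[RHS]ls0 scaler_suml -big_split; apply: eq_bigr => i _ /=.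
  by rewrite /fs scalerDr scalerA.
rewrite sumE extM.
under eq_bigr do rewrite extW.
exact: ls0'.
Qed.

Set Implicit Arguments. Unset Strict Implicit.

Definition pnull (R : realType) (T : ptopologicalType) (p : borel_prob T R)
  (A : set T) : Prop := p.-negligible A.
Arguments pnull {R T}.

Lemma borelC (T : ptopologicalType) (B : set T) : borel B -> borel (~` B).
Proof. exact: (@measurableC _ (borelType T) B). Qed.
Lemma borelT (T : ptopologicalType) : borel (@setT T).
Proof. exact: (@measurableT _ (borelType T)). Qed.

Lemma ext0_null (R : realType) (T : ptopologicalType) (p : borel_prob T R) A :
  ext_val p A 0%E -> pnull p A.
Proof. by move=> [B1 [B2 [_ mB2 _ AB2 [_ pB2]]]]; exists B2; split. Qed.

Lemma pnullS (R : realType) (T : ptopologicalType) (p : borel_prob T R) A B :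
  B `<=` A -> pnull p A -> pnull p B.
Proof. by rewrite /pnull; move=> BA NA; apply: negligibleS NA. Qed.

Lemma pnullT (R : realType) (T : ptopologicalType) (p : borel_prob T R) :
  ~ pnull p setT.
Proof.
move=> [B [mB pB0 TB]].
have : B = setT by apply/seteqP; split => // x _; exact: TB.
by move=> BT; move: pB0; rewrite BT probability_setT => /eqP; rewrite eqe oner_eq0.
Qed.

Lemma full_null (R : realType) (T : ptopologicalType) (p : borel_prob T R) A B :
  borel B -> p B = 0%E -> A `<=` B -> ext_val p (~` A) 1%E.
Proof.
move=> mB pB AB; exists (~` B), setT; split => //.
- exact: borelC.
- exact: borelT.
- by move=> w nBw Aw; apply: nBw; apply: AB.
- by split; [rewrite probability_setC // pB sube0 | rewrite probability_setT].
Qed.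

Lemma full_nullC (R : realType) (T : ptopologicalType) (p : borel_prob T R) A :
  ext_val p A 1%E -> pnull p (~` A).
Proof.
move=> [B1 [B2 [mB1 _ B1A _ [pB1 _]]]]; exists (~` B1); split.
- exact: borelC.
- by rewrite probability_setC // pB1 subee.
- by move=> w nAw B1w; apply: nAw; apply: B1A.
Qed.

Lemma supp_E_iff (R : realType) (T : ptopologicalType) d (Y : T -> 'rV[R]_d)
  (p : borel_prob T R) y :
  supp_E Y p y <-> (forall U, open U -> U y -> ~ pnull p (Y @^-1` U)).
Proof.
split.
  move=> H U oU Uy [B [mB pB YUB]].
  have := H (~` U) (open_closedC oU).
  have -> : Y @^-1` (~` U) = ~` (Y @^-1` U) by [].
  by move=> /(_ (full_null mB pB YUB)); apply.
move=> H A cA eA; case: (pselect (A y)) => // nAy; exfalso.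
apply: (H (~` A) (closed_openC cA) nAy).
exact: full_nullC eA.
Qed.

Lemma supp_D_iff (R : realType) (T : ptopologicalType) d (Y : T -> 'rV[R]_d)
  (Q : set (borel_prob T R)) y :
  supp_D Y Q y <-> (forall U, open U -> U y ->
                     ~ (forall q, Q q -> pnull q (Y @^-1` U))).
Proof.
split.
  move=> H U oU Uy allq.
  have := H (~` U) (open_closedC oU).
  have -> : Y @^-1` (~` U) = ~` (Y @^-1` U) by [].
  apply; last exact: Uy.
  move=> q Qq; have [B [mB pB YUB]] := allq q Qq.
  exact: full_null mB pB YUB.
move=> H A cA eA; case: (pselect (A y)) => // nAy; exfalso.
apply: (H (~` A) (closed_openC cA) nAy) => q Qq.
exact: full_nullC (eA q Qq).
Qed.

Lemma supp_E_D (R : realType) (T : ptopologicalType) d (Y : T -> 'rV[R]_d)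
  (Q : set (borel_prob T R)) q y : Q q -> supp_E Y q y -> supp_D Y Q y.
Proof.
move=> Qq /supp_E_iff H; apply/supp_D_iff => U oU Uy allq.
exact: (H U oU Uy (allq q Qq)).
Qed.

Lemma mixture (R : realType) (T : ptopologicalType) (Q : set (borel_prob T R)) p q :
  convex_probs Q -> Q p -> Q q ->
  exists2 r, Q r & forall A, pnull r A -> pnull p A /\ pnull q A.
Proof.
move=> cQ Qp Qq.
have h01 : 0 <= (2^-1 : R) <= 1.
  by apply/andP; split; lra.
have [r Qr rE] := cQ p q Qp Qq _ h01.
exists r => // A [B [mB rB AB]].
move: rB; rewrite rE //.
have h1 : 0 < (2^-1 : R) by lra.
have h2 : 0 < 1 - (2^-1 : R) by lra.
move=> /eqP; rewrite padde_eq0; last 2 first.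
- by apply: mule_ge0; [rewrite lee_fin ltW | exact: measure_ge0].
- by apply: mule_ge0; [rewrite lee_fin ltW | exact: measure_ge0].
rewrite !mule_eq0 !eqe (gt_eqF h1) (gt_eqF h2) /= => /andP [/eqP pB /eqP qB].
by split; exists B; split.
Qed.

Lemma supp_E_mix (R : realType) (T : ptopologicalType) d (Y : T -> 'rV[R]_d)
  (p r : borel_prob T R) :
  (forall A, pnull r A -> pnull p A) -> supp_E Y p `<=` supp_E Y r.
Proof.
move=> H y /supp_E_iff Hy; apply/supp_E_iff => U oU Uy /H; exact: Hy.
Qed.

Lemma null_fin (R : realType) (T : ptopologicalType) (p : borel_prob T R)
  (I : eqType) (s : seq I) (F : I -> set T) (A : set T) :
  (forall i, i \in s -> pnull p (F i)) ->
  A `<=` [set w | exists2 i, i \in s & F i w] -> pnull p A.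
Proof.
elim: s A => [|i s IH] A Hs AS.
  apply: (pnullS (A := set0)); last exact: negligible_set0.
  by move=> w /AS [].
apply: (pnullS (A := F i `|` [set w | exists2 j, j \in s & F j w])).
  move=> w /AS [j]; rewrite in_cons => /orP [/eqP -> | js] Fjw; first by left.
  by right; exists j.
apply: negligibleU; first by apply: Hs; rewrite mem_head.
apply: IH => //; first by move=> j js; apply: Hs; rewrite in_cons js orbT.
Qed.

Lemma null_cup (R : realType) (T : ptopologicalType) (p : borel_prob T R)
  (F : nat -> set T) (A : set T) :
  (forall n, pnull p (F n)) -> A `<=` \bigcup_n F n -> pnull p A.
Proof.
move=> HF AF; apply: (pnullS AF).
exact: negligible_bigcup.
Qed.

Lemma compact_supp (R : realType) (T : ptopologicalType) d (Y : T -> 'rV[R]_d)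
  (p : borel_prob T R) (K : set 'rV[R]_d) :
  compact K -> ~ pnull p (Y @^-1` K) -> exists z, K z /\ supp_E Y p z.
Proof.
move=> cK nK; case: (pselect (exists z, K z /\ supp_E Y p z)) => // nE.
exfalso; apply: nK.
pose D := [set U : set 'rV[R]_d | open U /\ pnull p (Y @^-1` U)].
have cov : K `<=` cover D id.
  move=> z Kz.
  have nz : ~ supp_E Y p z by move=> Ez; apply: nE; exists z.
  move: nz; rewrite supp_E_iff => /existsNP [U] /not_implyP [oU] /not_implyP [Uz].
  by move=> /contrapT nU; exists U.
move: cK; rewrite compact_cover => /(_ _ D id) [].
- by move=> U [].
- exact: cov.
move=> D' D'D KD'.
apply: (@null_fin R T p _ (finmap.enum_fset D') (fun U => Y @^-1` U)).
  move=> U UD; have := D'D U UD; rewrite inE; by case.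
move=> w Kw; have [U UD' UYw] := KD' _ Kw.
by exists U.
Qed.

Lemma supp_cover (R : realType) (T : ptopologicalType) d (Y : T -> 'rV[R]_d)
  (p : borel_prob T R) (S : set 'rV[R]_d) (K : nat -> set 'rV[R]_d) :
  (forall n, compact (K n)) -> (forall n, K n `<=` S) ->
  S `<=` \bigcup_n K n ->
  ~ pnull p (Y @^-1` S) -> exists z, S z /\ supp_E Y p z.
Proof.
move=> cK KS SK nS.
case: (pselect (forall n, pnull p (Y @^-1` K n))) => [allN|].
  exfalso; apply: nS; apply: (null_cup allN) => w /SK [n _ Kn].
  by exists n.
move=> /existsNP [n nn]; have [z [Kz Ez]] := compact_supp (cK n) nn.
by exists z; split => //; exact: (KS n).
Qed.

Lemma closed_dot_norm (R : realType) d (f : 'rV[R]_d -> R) (c : R) (r : R) :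
  continuous f -> closed [set z : 'rV[R]_d | c <= f z /\ `|z| <= r].
Proof.
move=> fc.
have -> : [set z : 'rV[R]_d | c <= f z /\ `|z| <= r] =
   (f @^-1` [set x | c <= x]) `&` ((fun z : 'rV[R]_d => `|z|) @^-1` [set x | x <= r]).
  by [].
apply: closedI.
  by apply: preimage_closed; [move=> x _; exact: fc | exact: closed_ge].
apply: preimage_closed; last exact: closed_le.
by move=> x _; exact: norm_continuous.
Qed.

Lemma bounded_norm (R : realType) d (P : set 'rV[R]_d) (r : R) :
  bounded_set [set z : 'rV[R]_d | P z /\ `|z| <= r].
Proof.
change (\forall M \near +oo, globally [set z : 'rV[R]_d | P z /\ `|z| <= r]
   [set x | `|x| <= M]).
near=> M => z [_ zr] /=.
apply: (le_trans zr); near: M; apply: nbhs_pinfty_ge.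
exact: num_real.
Unshelve. all: by end_near.
Qed.

Lemma supp_neg (R : realType) (T : ptopologicalType) d (Y : T -> 'rV[R]_d)
  (p : borel_prob T R) (h : 'rV[R]_d) :
  ~ pnull p [set w | dotv h (Y w) < 0] -> exists z, supp_E Y p z /\ dotv h z < 0.
Proof.
move=> nN.
pose K n := [set z : 'rV[R]_d | 1 <= dotv (- (n.+1)%:R *: h) z /\ `|z| <= n%:R].
suff [z [Sz Ez]] : exists z, [set z | dotv h z < 0] z /\ supp_E Y p z.
  by exists z.
apply: (@supp_cover R T d Y p _ K).
- move=> n; apply: bounded_closed_compact; first exact: bounded_norm.
  by apply: closed_dot_norm; exact: dotv_cont.
- move=> n z [] /=; rewrite dotvZl mulNr => H _.
  rewrite ltNge; apply/negP => hz.
  have : 0 <= (n.+1)%:R * dotv h z by apply: mulr_ge0.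
  lra.
- move=> z /= hz; pose a := - dotv h z.
  have aP : 0 < a by rewrite oppr_gt0.
  pose n := maxn (Num.Def.archi_bound a^-1) (Num.Def.archi_bound `|z|).
  exists n => //; split.
    rewrite dotvZl mulNr -mulrN -/a.
    have aiP : 0 < a^-1 by rewrite invr_gt0.
    have h1 := archi_boundP (ltW aiP).
    have h2 : (Num.Def.archi_bound a^-1)%:R <= (n.+1)%:R :> R.
      by rewrite ler_nat; apply: ltnW; rewrite ltnS leq_maxl.
    have h3 : 0 < (n.+1)%:R - a^-1 by lra.
    have := mulr_gt0 h3 aP; rewrite mulrBl mulVf ?gt_eqF //.
    lra.
  have := archi_boundP (normr_ge0 z).
  have : (Num.Def.archi_bound `|z|)%:R <= n%:R :> R by rewrite ler_nat leq_maxr.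
  lra.
- exact: nN.
Qed.

Lemma supp_nonempty (R : realType) (T : ptopologicalType) d (Y : T -> 'rV[R]_d)
  (p : borel_prob T R) : exists z, supp_E Y p z.
Proof.
pose K n := [set z : 'rV[R]_d | 0 <= dotv 0 z /\ `|z| <= n%:R].
suff [z [_ Ez]] : exists z, setT z /\ supp_E Y p z by exists z.
apply: (@supp_cover R T d Y p _ K).
- move=> n; apply: bounded_closed_compact; first exact: bounded_norm.
  by apply: closed_dot_norm; exact: dotv_cont.
- by [].
- move=> z _; exists (Num.Def.archi_bound `|z|) => //; split.
    by rewrite dotvC dotv0r.
  exact/ltW/archi_boundP.
- exact: pnullT.
Qed.

Lemma open_dot_lt (R : realType) d (h : 'rV[R]_d) (c : R) :
  open [set z : 'rV[R]_d | dotv h z < c].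
Proof.
apply: (@open_comp _ _ (dotv h) [set x | x < c]); last exact: open_lt.
by move=> x _; exact: dotv_cont.
Qed.

Lemma open_dot_neq (R : realType) d (h : 'rV[R]_d) :
  open [set z : 'rV[R]_d | dotv h z <> 0].
Proof.
apply: (@open_comp _ _ (dotv h) (~` [set x | x = 0])).
  by move=> x _; exact: dotv_cont.
exact/closed_openC/closed_eq.
Qed.

Lemma borel_open (T : ptopologicalType) (A : set T) : open A -> borel A.
Proof. by move=> oA; apply: sub_sigma_algebra. Qed.

Lemma null_ext0 (R : realType) (T : ptopologicalType) (p : borel_prob T R) A :
  pnull p A -> ext_val p A 0%E.
Proof.
move=> [B [mB pB AB]]; exists set0, B; split => //.
- exact: (@measurable0 _ (borelType T)).
Qed.

Definition SQ (R : realType) (T : ptopologicalType) d (Y : T -> 'rV[R]_d)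
  (Q : set (borel_prob T R)) : set 'rV[R]_d :=
  [set z | exists2 q, Q q & supp_E Y q z].

Lemma geomNA (R : realType) (T : ptopologicalType) d (Y : T -> 'rV[R]_d)
  (Q : set (borel_prob T R)) :
  univ_measurable_fun Y -> NA Q Y ->
  forall h, (forall z, SQ Y Q z -> 0 <= dotv h z) ->
  forall z, SQ Y Q z -> dotv h z = 0.
Proof.
move=> UM NAQ h hS.
have allnull q : Q q -> pnull q [set w | dotv h (Y w) < 0].
  move=> Qq; case: (pselect (pnull q [set w | dotv h (Y w) < 0])) => // nn.
  have [z [Ez hz]] := supp_neg nn.
  by have := hS z (ex_intro2 _ _ q Qq Ez); rewrite leNgt hz.
have qs : quasi_surely Q (fun w => 0 <= dotv h (Y w)).
  exists [set w | dotv h (Y w) < 0]; split.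
  - apply: (UM [set z | dotv h z < 0]); apply: borel_open; exact: open_dot_lt.
  - by move=> q Qq; apply: null_ext0; apply: allnull.
  - by move=> w; rewrite /= ltNge => /negP; rewrite negbK.
have [N [_ Nnull HN]] := NAQ h qs.
move=> z [q Qq Ez].
case: (pselect (dotv h z = 0)) => // hz; exfalso.
move: Ez; rewrite supp_E_iff => /(_ _ (@open_dot_neq _ _ h) hz); apply.
apply: (pnullS (A := N)); last exact: ext0_null (Nnull q Qq).
move=> w /= hw; case: (pselect (N w)) => // nNw.
by exfalso; apply: hw; apply: HN.
Qed.

Lemma D_perp (R : realType) (T : ptopologicalType) d (Y : T -> 'rV[R]_d)
  (Q : set (borel_prob T R)) h :
  (forall z, SQ Y Q z -> dotv h z = 0) ->
  forall y, supp_D Y Q y -> dotv h y = 0.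
Proof.
move=> hS y; rewrite supp_D_iff => Hy.
case: (pselect (dotv h y = 0)) => // hy; exfalso.
apply: (Hy _ (@open_dot_neq _ _ h) hy) => q Qq.
have neg h' : (forall z, SQ Y Q z -> dotv h' z = 0) ->
    pnull q [set w | dotv h' (Y w) < 0].
  move=> h'S.
  case: (pselect (pnull q [set w | dotv h' (Y w) < 0])) => // nn.
  have [z [Ez hz]] := supp_neg nn.
  by move: hz; rewrite h'S ?ltxx //; exists q.
apply: (pnullS (A := [set w | dotv h (Y w) < 0] `|` [set w | dotv (- h) (Y w) < 0])).
  move=> w /= hw; case: (ltgtP (dotv h (Y w)) 0) => [l|g|e].
  - by left.
  - by right; rewrite dotvNl oppr_lt0.
  - by exfalso; apply: hw.
apply: negligibleU; apply: neg => // z Sz.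
by rewrite dotvNl hS ?oppr0.
Qed.

Lemma row_col_mx (R : realType) m n d (A : 'M[R]_(m, d)) (B : 'M[R]_(n, d))
  (P : 'rV[R]_d -> Prop) :
  (forall i, P (row i A)) -> (forall i, P (row i B)) ->
  forall i, P (row i (col_mx A B)).
Proof.
move=> PA PB i; case: (split_ordP i) => j ->; first by rewrite rowKu.
by rewrite rowKd.
Qed.

Lemma rank_col_mx (R : realType) m d (M : 'M[R]_(m, d)) (z : 'rV[R]_d) :
  ~~ (z <= M)%MS -> (\rank M < \rank (col_mx M z))%N.
Proof.
move=> nz; have : (M < M + z)%MS.
  rewrite ltmxE addsmxSl /= addsmx_sub negb_and submx_refl /=.
  exact: nz.
rewrite ltmxErank => /andP [_].
by rewrite (addsmxE M z).
Qed.

Lemma span_basis (R : realType) d (S : set 'rV[R]_d) :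
  exists m (M : 'M[R]_(m, d)), (forall i, S (row i M)) /\
    forall z, S z -> (z <= M)%MS.
Proof.
pose P k := `[< exists m (M : 'M[R]_(m, d)), (forall i, S (row i M)) /\ \rank M = k >].
have P0 : exists k, P k.
  exists 0%N; apply/asboolP; exists 0%N, (0 : 'M[R]_(0, d)); split => [[]//|].
  by apply/eqP; rewrite -leqn0 rank_leq_row.
have Pb k : P k -> (k <= d)%N.
  by move=> /asboolP [m [M [_ <-]]]; exact: rank_leq_col.
case: (ex_maxnP P0 Pb) => k /asboolP [m [M [MS rk]]] maxk.
exists m, M; split => // z Sz.
apply: contraT => nz.
have : P (\rank (col_mx M z)).
  apply/asboolP; exists (m + 1)%N, (col_mx M z); split => //.
  apply: row_col_mx => // i; rewrite (_ : row i z = z) //.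
  by apply/rowP => j; rewrite !mxE [i]ord1.
move/maxk; rewrite leqNgt -rk.
by rewrite rank_col_mx.
Qed.

Lemma bounded_le (R : realType) d (A : set 'rV[R]_d) (r : R) :
  (forall v, A v -> `|v| <= r) -> bounded_set A.
Proof.
move=> Ar.
change (\forall M \near +oo, globally A [set x | `|x| <= M]).
near=> M => z Az /=.
apply: (le_trans (Ar z Az)); near: M; apply: nbhs_pinfty_ge.
exact: num_real.
Unshelve. all: by end_near.
Qed.

Lemma coker_dot (R : realType) m d (M : 'M[R]_(m, d)) (v : 'rV[R]_d) j :
  dotv (col j (cokermx M))^T v = (v *m cokermx M) 0 j.
Proof. by rewrite dotvE trmxK !mxE; apply: eq_bigr => k _; rewrite mxE. Qed.

Lemma closed_sub (R : realType) m d (M : 'M[R]_(m, d)) :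
  closed [set v : 'rV[R]_d | (v <= M)%MS].
Proof.
have -> : [set v : 'rV[R]_d | (v <= M)%MS] =
    \bigcap_(j in setT) (dotv (col j (cokermx M))^T @^-1` [set x | x = 0]).
  apply/seteqP; split => v /=.
    by rewrite submxE => /eqP vC j _; rewrite /= coker_dot vC mxE.
  move=> H; rewrite submxE; apply/eqP/rowP => j.
  by rewrite -coker_dot mxE; apply: H.
apply: closed_bigI => j _; apply: preimage_closed; last exact: closed_eq.
by move=> x _; exact: dotv_cont.
Qed.

Lemma finite_family (R : realType) d (S : set 'rV[R]_d) m (M : 'M[R]_(m, d)) z0 :
  S z0 -> (forall i, S (row i M)) -> (forall z, S z -> (z <= M)%MS) ->
  (forall h, (forall z, S z -> 0 <= dotv h z) -> forall z, S z -> dotv h z = 0) ->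
  exists n (F : 'M[R]_(n, d)), [/\ (0 < n)%N, forall i, S (row i F),
     forall z, S z -> (z <= F)%MS &
     forall h, (forall i, 0 <= dotv h (row i F)) -> forall i, dotv h (row i F) = 0].
Proof.
move=> Sz0 MS span gna.
pose a (s : 'rV[R]_d) := s *m pinvmx M.
have aK s : S s -> a s *m M = s by move=> Ss; rewrite /a mulmxKpV // span.
have dotM h s : S s -> dotv h s = dotv (h *m M^T) (a s).
  move=> Ss; rewrite -{1}(aK s Ss) !dotvE.
  by rewrite trmx_mul trmxK mulmxA.
pose K := [set v : 'rV[R]_m | (v <= M^T)%MS /\ `|v| = 1].
have cK : compact K.
  apply: bounded_closed_compact.
    by apply: (@bounded_le _ _ _ 1) => v [_ ->].
  apply: closedI; first exact: closed_sub.
  apply: (@preimage_closed _ _ (fun v : 'rV[R]_m => `|v|) [set x | x = 1]).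
    by move=> x _; exact: norm_continuous.
  exact: closed_eq.
pose f (s : 'rV[R]_d) := [set v : 'rV[R]_m | dotv (a s) v < 0].
have cov : K `<=` cover S f.
  move=> v [vM v1].
  have [D vE] := submxP vM.
  have : ~ (forall z, S z -> 0 <= dotv D z).
    move=> allpos; have allz := gna D allpos.
    move: v1; suff -> : v = 0 by rewrite normr0 => /eqP; rewrite eq_sym oner_eq0.
    apply/rowP => i; rewrite [RHS]mxE vE.
    have := allz _ (MS i); rewrite dotvE => <-.
    by rewrite !mxE; apply: eq_bigr => k _; rewrite !mxE mulrC.
  move=> /existsNP [s] /not_implyP [Ss] /negP; rewrite -ltNge => hs.
  by exists s => //; rewrite /f /= dotvC vE -dotM.
move: cK; rewrite compact_cover => /(_ _ S f) [].
- by move=> s _; exact: open_dot_lt.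
- exact: cov.
move=> D' D'S KD'.
pose s := z0 :: finmap.enum_fset D'.
pose G := \matrix_(i < size s) nth 0 s i.
have GS i : S (row i G).
  rewrite rowK; have : nth 0 s i \in s by rewrite mem_nth.
  rewrite in_cons => /orP [/eqP -> // | iD].
  by have := D'S _ iD; rewrite inE.
have FS := row_col_mx MS GS.
exists (m + size s)%N, (col_mx M G); split.
- by rewrite /= addnS.
- exact: FS.
- move=> z Sz; apply: submx_trans (span z Sz) _.
  by rewrite -addsmxE addsmxSl.
move=> h hpos.
have hG i : 0 <= dotv h (row i G) by have := hpos (rshift m i); rewrite rowKd.
pose v := h *m M^T.
have vz : v = 0.
  case: (pselect (v = 0)) => // vn0; exfalso.
  have nv : 0 < `|v| by rewrite normr_gt0; apply/eqP.
  pose v' := `|v|^-1 *: v.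
  have Kv' : K v'.
    split; first by apply: scalemx_sub; apply/submxP; exists h.
    by rewrite normrZ normrV ?unitfE ?gt_eqF // normr_id mulVf ?gt_eqF.
  have [t D't ft] := KD' _ Kv'.
  have St : S t by have := D'S _ D't; rewrite inE.
  move: ft; rewrite /f /= dotvZr pmulr_rlt0 ?invr_gt0 // dotvC -dotM // => ht.
  have ts : t \in s by rewrite in_cons D't orbT.
  have its : (index t s < size s)%N by rewrite index_mem.
  have := hG (Ordinal its).
  by rewrite rowK /= nth_index // leNgt ht.
by move=> i; rewrite dotM ?FS // -/v vz dotvC dotv0r.
Qed.

Lemma entry_le (R : realType) m n (x : 'M[R]_(m, n)) i j : `|x i j| <= `|x|.
Proof.
have -> : `|x| = mx_norm x by [].
rewrite mx_normrE.
exact: (le_bigmax _ (fun ij : 'I_m * 'I_n => `|x ij.1 ij.2|) (i, j)).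
Qed.

Lemma mix_all (R : realType) (T : ptopologicalType) d (Y : T -> 'rV[R]_d)
  (Q : set (borel_prob T R)) q0 :
  Q q0 -> convex_probs Q ->
  forall n (qs : 'I_n -> borel_prob T R), (forall i, Q (qs i)) ->
  exists2 p, Q p & forall i, supp_E Y (qs i) `<=` supp_E Y p.
Proof.
move=> Qq0 cQ; elim => [|n IH] qs Qqs.
  by exists q0 => // -[].
have [p' Qp' p'E] := IH (fun i => qs (widen_ord (leqnSn n) i)) (fun i => Qqs _).
have [r Qr rN] := mixture cQ Qp' (Qqs ord_max).
exists r => // k.
have [->|kn] := eqVneq k ord_max.
  by apply: supp_E_mix => A /rN [].
have [j ->] := ord_split (elimN eqP kn).
apply: subset_trans (p'E j) _.
by apply: supp_E_mix => A /rN [].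
Qed.

Lemma dot_span0 (R : realType) N d (F : 'M[R]_(N, d)) h z :
  (z <= F)%MS -> (forall i, dotv h (row i F) = 0) -> dotv h z = 0.
Proof.
move=> /submxP [D ->] H; rewrite mulmx_sum_row dotv_sumr big1 // => i _.
by rewrite dotvZr H mulr0.
Qed.

Lemma comb_sub (R : realType) N d (F : 'M[R]_(N, d)) (A : set 'rV[R]_d) x :
  (forall z, A z -> (z <= F)%MS) ->
  (exists n (v : 'I_n -> 'rV[R]_d) (l : 'I_n -> R),
     (forall i, A (v i)) /\ x = \sum_(i < n) l i *: v i) -> (x <= F)%MS.
Proof.
move=> AF [n [v [l [vA ->]]]]; apply: summx_sub => i _.
by apply: scalemx_sub; apply: AF.
Qed.

Lemma aff_sub (R : realType) N d (F : 'M[R]_(N, d)) (A : set 'rV[R]_d) x :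
  (forall z, A z -> (z <= F)%MS) -> aff_hull A x -> (x <= F)%MS.
Proof.
move=> AF [n [v [l [vA _ xE]]]]; apply: (comb_sub AF).
by exists n, v, l.
Qed.

Lemma conv_sub (R : realType) N d (F : 'M[R]_(N, d)) (A : set 'rV[R]_d) x :
  (forall z, A z -> (z <= F)%MS) -> conv_hull A x -> (x <= F)%MS.
Proof.
move=> AF [n [v [l [vA _ _ xE]]]]; apply: (comb_sub AF).
by exists n, v, l.
Qed.

Unset Implicit Arguments. Set Strict Implicit.

Theorem proposition4 (R : realType) (Omega : ptopologicalType) (d : nat)
    (Q : set (borel_prob Omega R)) (Y : Omega -> 'rV[R]_d) :
  polish_space R Omega ->
  Q !=set0 ->
  convex_probs Q ->
  univ_measurable_fun Y ->
  NA Q Y ->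
  exists2 p, Q p &
    rel_int (conv_hull (supp_E Y p)) 0 /\
    aff_hull (supp_E Y p) = aff_hull (supp_D Y Q).
Proof.
move=> _ [q0 Qq0] cQ UM NAQ.
pose S := SQ Y Q.
have gna := geomNA UM NAQ.
have [z0 Ez0] := supp_nonempty Y q0.
have Sz0 : S z0 by exists q0.
have [m [M [MS Mspan]]] := span_basis S.
have [N [F [Npos FS Fspan Fst]]] := finite_family Sz0 MS Mspan gna.
have [l [lpos l0]] := @stiemke R d N (fun i => row i F) Fst.
pose L := \sum_i l i.
pose i0 : 'I_N := Ordinal Npos.
have Lpos : 0 < L.
  rewrite /L (bigD1 i0) //=; apply: ltr_wpDr; last exact: lpos.
  by apply: sumr_ge0 => i _; exact: ltW.
pose lam i := l i / L.
have lampos i : 0 < lam i by rewrite divr_gt0.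
have lamsum : \sum_i lam i = 1 by rewrite -mulr_suml mulfV ?gt_eqF.
have lam0 : \sum_i lam i *: row i F = 0.
  under eq_bigr do rewrite /lam mulrC -scalerA.
  by rewrite -scaler_sumr l0 scaler0.
have [qs Qqs Eqs] : exists2 qs : 'I_N -> borel_prob Omega R,
    (forall i, Q (qs i)) & forall i, supp_E Y (qs i) (row i F).
  exists (fun i => sval (cid2 (FS i))) => i; by case: cid2.
have [p Qp pE] := mix_all Y Qq0 cQ Qqs.
have FE i : supp_E Y p (row i F) by apply: pE; apply: Eqs.
have ED : supp_E Y p `<=` supp_D Y Q by move=> y; exact: supp_E_D Qp.
have DF y : supp_D Y Q y -> (y <= F)%MS.
  move=> Dy.
  have [c ->] : exists c : 'I_N -> R, y = \sum_(i < N) c i *: row i F.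
    apply: span_dual => h hF; apply: (D_perp _ Dy) => z Sz.
    exact: dot_span0 (Fspan z Sz) hF.
  by apply: summx_sub => i _; apply: scalemx_sub; exact: row_sub.
have EF z : supp_E Y p z -> (z <= F)%MS by move=> Ez; apply: DF; apply: ED.
have span_aff x : (x <= F)%MS -> aff_hull (supp_E Y p) x.
  move=> /submxP [c ->]; rewrite mulmx_sum_row.
  pose sc := \sum_i c 0 i.
  exists N, (fun i => row i F), (fun i => c 0 i + (1 - sc) * lam i); split => //.
    by rewrite big_split /= -mulr_sumr lamsum mulr1 addrC subrK.
  under [RHS]eq_bigr do rewrite scalerDl -scalerA.
  by rewrite big_split /= -scaler_sumr lam0 scaler0 addr0.
exists p => //; split; last first.
  apply/seteqP; split => x.
    move=> [n [v [lv [vE sv xE]]]]; exists n, v, lv; split => // i; exact: ED.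
  move=> Dx; apply: span_aff; exact: aff_sub DF Dx.
split.
  exists N, (fun i => row i F), lam; split => //.
  - by move=> i; exact: ltW.
pose P := pinvmx F.
pose beta := \sum_j \sum_k `|P j k| + 1.
have betapos : 0 < beta.
  apply: ltr_wpDl; last exact: ltr01.
  by apply: sumr_ge0 => j _; apply: sumr_ge0 => k _.
pose mu := \prod_i lam i.
have mupos : 0 < mu by apply: prodr_gt0 => i _.
have lamle1 i : lam i <= 1.
  rewrite -lamsum (bigD1 i) //= lerDl; apply: sumr_ge0 => j _; exact: ltW.
have mule i : mu <= lam i.
  rewrite /mu (bigD1 i) //= -[leRHS]mulr1 ler_pM2l // prodr_ile1 // => j _.
  by rewrite ltW ?lamle1.
have N1pos : 0 < (N%:R + 1 : R) by apply: ltr_wpDl; [exact: ler0n | exact: ltr01].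
pose e := mu / (beta * (N%:R + 1)).
exists e; first by rewrite divr_gt0 // mulr_gt0.
move=> x [bx ax].
have xF : (x <= F)%MS by apply: (aff_sub _ ax) => z; exact: conv_sub EF.
have nx : `|x| < e by move: bx; rewrite -ball_normE /ball_ /= sub0r normrN.
pose c := x *m P.
have xE : x = c *m F by rewrite /c mulmxKpV.
have cb k : `|c 0 k| <= beta * `|x|.
  rewrite /c mxE.
  apply: (le_trans (ler_norm_sum _ _ _)).
  apply: (@le_trans _ _ (\sum_j `|x| * `|P j k|)).
    by apply: ler_sum => j _; rewrite normrM ler_wpM2r // entry_le.
  rewrite -mulr_sumr mulrC ler_wpM2r //.
  apply: (@le_trans _ _ (\sum_j \sum_k `|P j k|)); last by rewrite lerDl.
  apply: ler_sum => j _; rewrite (bigD1 k) //= lerDl.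
  by apply: sumr_ge0 => k' _.
pose sc := \sum_k c 0 k.
have scb : `|sc| <= N%:R * (beta * `|x|).
  apply: (le_trans (ler_norm_sum _ _ _)).
  apply: (le_trans (ler_sum _ (fun k _ => cb k))).
  by rewrite sumr_const card_ord mulr_natl.
have key : (N%:R + 1) * (beta * `|x|) < mu.
  move: nx; rewrite /e ltr_pdivlMr ?mulr_gt0 //.
  have -> : (N%:R + 1) * (beta * `|x|) = `|x| * (beta * (N%:R + 1)) by ring.
  by [].
exists N, (fun i => row i F), (fun k => lam k + c 0 k - sc * lam k); split => //.
- move=> k /=.
  have F1 := cb k.
  have F6 : - `|c 0 k| <= c 0 k by rewrite lerNl -normrN ler_norm.
  have F5 : sc * lam k <= `|sc|.
    apply: (le_trans (ler_norm _)); rewrite normrM (ger0_norm (ltW (lampos k))).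
    by rewrite ler_piMr // normr_ge0.
  have F7 := mule k.
  lra.
- by rewrite sumrB big_split /= -mulr_sumr lamsum -/sc mulr1 addrK.
- apply: (etrans xE); rewrite mulmx_sum_row.
  under [RHS]eq_bigr do rewrite scalerBl scalerDl.
  rewrite sumrB big_split /= lam0 add0r.
  under [X in _ = _ - X]eq_bigr do rewrite -scalerA.
  by rewrite -scaler_sumr lam0 scaler0 subr0.
Qed.
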